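(* Let $A\in\mathbb{R}^{n\times n}$, $B\in\mathbb{R}^{n\times m}$, $N\geq1$ an integer, $\Omega=\{x\in\mathbb{R}^n: Hx\leq h\}$ with $H\in\mathbb{R}^{n_h\times n}$, $X=\{y\in\mathbb{R}^n: Fy\leq f\}$ with $F\in\mathbb{R}^{n_f\times n}$, and $U=\{v\in\mathbb{R}^m: Gv\leq g\}$ with $G\in\mathbb{R}^{n_g\times m}$. Suppose $0\in\Omega$, $0\in X$, $0\in U$. For $k\geq1$ let $Q_k^x(\Omega,U,X)$ be the set of $x\in X$ for which there exist inputs $w_0,\dots,w_{k-1}\in U$ such that the trajectory $x_0=x$, $x_{j+1}=Ax_j+Bw_j$ satisfies $x_j\in X$ for all $j=1,\dots,k$ and $x_k\in\Omega$. Let $\bar{Q}^x_N(\Omega,U,X)=\mathrm{co}\big(\bigcup_{k=1}^N Q^x_k(\Omega,U,X)\big)$. Set $\bar n=n+Nm$ and $$\bar G=\begin{bmatrix} HA^N & HB & HAB & \cdots & HA^{N-1}B\\ 0 & G & 0 & \cdots & 0\\ 0 & 0 & G & \cdots & 0\\ \vdots & & & \ddots & \vdots\\ 0 & 0 & 0 & \cdots & G\\ FA^N & FB & FAB & \cdots & FA^{N-1}B\\ FA^{N-1} & 0 & FB & \cdots & FA^{N-2}B\\ \vdots & & & & \vdots\\ FA & 0 & 0 & \cdots & FB\\ F & 0 & 0 & \cdots & 0 \end{bmatrix},\qquad \bar g=\begin{bmatrix}h\\ g\\ \vdots\\ g\\ f\\ \vdots\\ f\end{bmatrix},\qquad \bar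 H=\begin{bmatrix}H & 0&\cdots&0\end{bmatrix}\in\mathbb{R}^{n_h\times\bar n}.$$ Here the columns of $\bar G$ are split into blocks of widths $n,m,\dots,m$ (one state block followed by $N$ input blocks indexed $i=1,\dots,N$); the $G$-rows consist of $N$ block rows, the $i$-th having $G$ in input block $i$; the $F$-rows consist of $N+1$ block rows, namely for $j=N,N-1,\dots,1$ a block row with $FA^j$ in the state block and, in input block $i$, $FA^{i-1-(N-j)}B$ if $i\geq N-j+1$ and $0$ otherwise, followed by the block row $[F\ 0\ \cdots\ 0]$. Correspondingly $\bar g$ consists of $h$, then $g$ repeated $N$ times, then $f$ repeated $N+1$ times, and $n_{\bar g}=n_h+Nn_g+(N+1)n_f$ is the number of rows of $\bar G$. If there exist a nonnegative (entrywise) matrix $T\in\mathbb{R}^{n_{\bar g}\times n_h}$ and $M\in\mathbb{R}^{\bar n\times\bar n}$ such that $$T\bar H=\bar G M,\qquad Th\leq\bar g,\qquad \begin{bmatrix}I&0&\cdots&0\end{bmatrix}=\begin{bmatrix}I&0&\cdots&0\end{bmatrix}M$$ (with $\begin{bmatrix}I&0&\cdots&0\end{bmatrix}\in\mathbb{R}^{n\times\bar n}$), then $\bar{Q}^x_N(\Omega,U,X)$ is a control invariant set for $x^+=Ax+Bu$ with input set $U$, and it is contained in $X$.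
   Context: A set $C\subseteq\mathbb{R}^n$ is control invariant for $x^+=Ax+Bu$ with input constraint $u\in U$ if for every $x\in C$ there exists $u\in U$ with $Ax+Bu\in C$. Vector inequalities are componentwise; $\mathrm{co}$ denotes convex hull. *)

(* Defs.v *)
From HB Require Import structures.
From mathcomp Require Import all_boot all_order all_algebra.
From mathcomp Require Import reals.
Set Implicit Arguments. Unset Strict Implicit. Unset Printing Implicit Defensive.
Import Order.TTheory GRing.Theory Num.Theory.
Local Open Scope ring_scope.

Section Defs.
Variable R : realType.

Definition lev (k : nat) (u v : 'cV[R]_k) : Prop := forall i, u i 0 <= v i 0.

Definition polyh (r d : nat) (P : 'M[R]_(r, d)) (p : 'cV[R]_r) (x : 'cV[R]_d) : Prop :=
  lev (P *m x) p.

Definition conv (d : nat) (S : 'cV[R]_d -> Prop) (x : 'cV[R]_d) : Prop :=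
  exists (p : nat) (lam : 'I_p -> R) (v : 'I_p -> 'cV[R]_d),
    (forall i, 0 <= lam i) /\ \sum_(i < p) lam i = 1 /\
    (forall i, S (v i)) /\ x = \sum_(i < p) lam i *: v i.

Definition control_invariant (n m : nat) (A : 'M[R]_n) (B : 'M[R]_(n, m))
  (U : 'cV[R]_m -> Prop) (C : 'cV[R]_n -> Prop) : Prop :=
  forall x, C x -> exists u, U u /\ C (A *m x + B *m u).

Fixpoint traj (n m : nat) (A : 'M[R]_n) (B : 'M[R]_(n, m)) (x : 'cV[R]_n)
  (w : nat -> 'cV[R]_m) (j : nat) : 'cV[R]_n :=
  match j with
  | 0 => x
  | j'.+1 => A *m traj A B x w j' + B *m w j'
  end.

Definition Qk (n m : nat) (A : 'M[R]_n) (B : 'M[R]_(n, m))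
  (Om : 'cV[R]_n -> Prop) (U : 'cV[R]_m -> Prop) (X : 'cV[R]_n -> Prop)
  (k : nat) (x : 'cV[R]_n) : Prop :=
  X x /\ exists w : nat -> 'cV[R]_m,
    (forall j, (j < k)%N -> U (w j)) /\
    (forall j, (1 <= j <= k)%N -> X (traj A B x w j)) /\
    Om (traj A B x w k).

Definition Qbar (n m : nat) (A : 'M[R]_n) (B : 'M[R]_(n, m))
  (Om : 'cV[R]_n -> Prop) (U : 'cV[R]_m -> Prop) (X : 'cV[R]_n -> Prop)
  (N : nat) : 'cV[R]_n -> Prop :=
  conv (fun x => exists k, (1 <= k <= N)%N /\ Qk A B Om U X k x).

End Defs.

Lemma ofs_lt (N m : nat) (k : 'I_(N * m)) : (k %% m < m)%N.
Proof.
move: k; case: m => [|m] k; last by rewrite ltn_mod.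
by case: k => k; rewrite muln0.
Qed.
Definition ofs (N m : nat) (k : 'I_(N * m)) : 'I_m := Ordinal (ofs_lt k).
Definition blk (N m : nat) (k : 'I_(N * m)) : nat := (k %/ m)%N.

Section Blocks.
Variable R : realType.
Variables (n m nh nf ng N : nat).
Variables (A : 'M[R]_n) (B : 'M[R]_(n, m)) (H : 'M[R]_(nh, n))
  (F : 'M[R]_(nf, n)) (G : 'M[R]_(ng, m)).

(* Columns: state block (width n), then N input blocks of width m,
   input block with 0-based index i (i.e. block i+1 of the paper).
   Rows: H-block row, N G-block rows (0-based q), N+1 F-block rows (0-based q,
   corresponding to j = N - q in the paper). *)
Definition Gbar : 'M[R]_(nh + N * ng + (N.+1) * nf, n + N * m) :=
  \matrix_(r, c)
    match split r with
    | inl r1 =>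
        match split r1 with
        | inl p =>
            match split c with
            | inl x => (H *m A ^+ N) p x
            | inr k => (H *m A ^+ (blk k) *m B) p (ofs k)
            end
        | inr t =>
            match split c with
            | inl _ => 0
            | inr k => if blk k == blk t then G (ofs t) (ofs k) else 0
            end
        end
    | inr t =>
        match split c with
        | inl x => (F *m A ^+ (N - blk t)) (ofs t) x
        | inr k => if (blk t <= blk k)%N
                   then (F *m A ^+ (blk k - blk t) *m B) (ofs t) (ofs k)
                   else 0
        end
    end.

Definition gbar (h : 'cV[R]_nh) (g : 'cV[R]_ng) (f : 'cV[R]_nf)
  : 'cV[R]_(nh + N * ng + (N.+1) * nf) :=
  col_mx (col_mx h (\col_(t < N * ng) g (ofs t) 0))
         (\col_(t < N.+1 * nf) f (ofs t) 0).

Definition Hbar : 'M[R]_(nh, n + N * m) := row_mx H 0.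

Definition Ibar : 'M[R]_(n, n + N * m) := row_mx 1%:M 0.

End Blocks.

(* Main.v *)
Require Import Defs.
From HB Require Import structures.
From mathcomp Require Import all_boot all_order all_algebra.
From mathcomp Require Import reals.
From mathcomp Require Import zify.
Set Implicit Arguments. Unset Strict Implicit. Unset Printing Implicit Defensive.
Import Order.TTheory GRing.Theory Num.Theory.
Local Open Scope ring_scope.

Lemma idx_lt (N m : nat) (b : 'I_N) (a : 'I_m) : (b * m + a < N * m)%N.
Proof.
have h1 : (b.+1 * m <= N * m)%N := leq_mul (ltn_ord b) (leqnn m).
rewrite mulSn in h1. have := ltn_ord a. lia.
Qed.
Definition idx (N m : nat) (b : 'I_N) (a : 'I_m) : 'I_(N * m) := Ordinal (idx_lt b a).

Lemma ofs_idx N m (b : 'I_N) (a : 'I_m) : ofs (idx b a) = a.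
Proof. apply: val_inj => /=. by rewrite modnMDl modn_small. Qed.

Lemma blk_idx N m (b : 'I_N) (a : 'I_m) : blk (idx b a) = b.
Proof.
rewrite /blk /=. have m0 : (0 < m)%N by case: a => a /=; case: m => //.
by rewrite divnMDl // divn_small // addn0.
Qed.

Lemma blk_lt N m (k : 'I_(N * m)) : (blk k < N)%N.
Proof.
rewrite /blk; case: k => k /=; case: m => [|m] hk; first by rewrite muln0 in hk.
by rewrite ltn_divLR.
Qed.
Definition blkord N m (k : 'I_(N * m)) : 'I_N := Ordinal (blk_lt k).

Lemma sum_blocks (V : nmodType) N m (F : 'I_(N * m) -> V) :
  \sum_(k < N * m) F k = \sum_(b < N) \sum_(a < m) F (idx b a).
Proof.
rewrite pair_bigA /=.
rewrite (reindex (fun p : 'I_N * 'I_m => idx p.1 p.2)) //=.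
exists (fun k => (blkord k, ofs k)) => [[b a] _ | k _] /=.
  congr pair; [apply: val_inj; exact: blk_idx | exact: ofs_idx].
apply: val_inj => /=. by rewrite /blk -divn_eq.
Qed.

Lemma split_l (p q : nat) (i : 'I_p) : split (lshift q i) = inl i.
Proof. exact: (unsplitK (inl _ i)). Qed.
Lemma split_r (p q : nat) (i : 'I_q) : split (rshift p i) = inr i.
Proof. exact: (unsplitK (inr _ i)). Qed.

Section Rows.
Variable R : realType.
Variables (n m nh nf ng N : nat).
Variables (A : 'M[R]_n) (B : 'M[R]_(n, m)) (H : 'M[R]_(nh, n))
  (F : 'M[R]_(nf, n)) (G : 'M[R]_(ng, m)).

Definition wb (w : 'cV[R]_(N * m)) (b : 'I_N) : 'cV[R]_m := \col_a w (idx b a) 0.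

Lemma row_H (x : 'cV[R]_n) (w : 'cV[R]_(N * m)) p :
  (Gbar N A B H F G *m col_mx x w) (lshift _ (lshift _ p)) 0
  = (H *m (A ^+ N *m x + \sum_(b < N) A ^+ b *m B *m wb w b)) p 0.
Proof.
rewrite /wb mxE big_split_ord /= mulmxDr mxE; congr (_ + _).
  under eq_bigr => i _ do rewrite mxE !split_l col_mxEu.
  by rewrite mulmxA mxE.
under eq_bigr => i _ do rewrite mxE !split_l split_r col_mxEd.
rewrite sum_blocks mulmx_sumr summxE; apply: eq_bigr => b _.
rewrite !mulmxA mxE; apply: eq_bigr => a _.
by rewrite blk_idx ofs_idx; congr (_ * _); rewrite mxE.
Qed.

Lemma row_G (x : 'cV[R]_n) (w : 'cV[R]_(N * m)) q a :
  (Gbar N A B H F G *m col_mx x w) (lshift _ (rshift _ (idx q a))) 0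
  = (G *m wb w q) a 0.
Proof.
rewrite /wb mxE big_split_ord /=.
under eq_bigr => i _ do rewrite mxE split_l split_r split_l mul0r.
rewrite big1 // add0r.
under eq_bigr => i _ do rewrite mxE split_l split_r split_r col_mxEd.
rewrite sum_blocks mxE (bigD1 q) //= [X in _ + X]big1 ?addr0.
  apply: eq_bigr => c _; rewrite blk_idx ofs_idx !blk_idx eqxx.
  by rewrite ofs_idx; congr (_ * _); rewrite mxE.
move=> b hb; apply: big1 => c _; rewrite !blk_idx.
by case: eqP => [/val_inj E|]; [rewrite E eqxx in hb | rewrite mul0r].
Qed.

Lemma row_F (x : 'cV[R]_n) (w : 'cV[R]_(N * m)) (q : 'I_N.+1) a :
  (Gbar N A B H F G *m col_mx x w) (rshift _ (idx q a)) 0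
  = (F *m (A ^+ (N - q) *m x + \sum_(b < N | (q <= b)%N) A ^+ (b - q) *m B *m wb w b)) a 0.
Proof.
rewrite /wb mxE big_split_ord /= mulmxDr mxE; congr (_ + _).
  under eq_bigr => i _ do rewrite mxE !split_r split_l col_mxEu blk_idx ofs_idx.
  by rewrite mulmxA mxE.
under eq_bigr => i _ do rewrite mxE !split_r col_mxEd.
rewrite sum_blocks mulmx_sumr summxE [RHS]big_mkcond /=; apply: eq_bigr => b _.
rewrite !blk_idx; case: ifP => hqb.
  rewrite !mulmxA mxE; apply: eq_bigr => c _.
  by rewrite ofs_idx blk_idx hqb ofs_idx; congr (_ * _); rewrite mxE.
rewrite big1 // => c _.
by rewrite blk_idx hqb mul0r.
Qed.

End Rows.

Section Traj.
Variable R : realType.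
Variables (n m N' : nat).
Variables (A : 'M[R]_n) (B : 'M[R]_(n, m)).

Definition useq (w : 'cV[R]_(N'.+1 * m)) (j : nat) : 'cV[R]_m :=
  wb w (inord (N' - j)).

Lemma traj_formula x w j : (j <= N'.+1)%N ->
  traj A B x (useq w) j = A ^+ j *m x +
    \sum_(b < N'.+1 | (N'.+1 - j <= b)%N) A ^+ (b - (N'.+1 - j)) *m B *m wb w b.
Proof.
elim: j => [_|j IH hj] /=.
  rewrite expr0 mul1mx big_pred0 ?addr0 // => b.
  by rewrite subn0 leqNgt ltn_ord.
have hj' : (j <= N'.+1)%N by apply: ltnW.
have hA : forall k, A *m A ^+ k = A ^+ k.+1 by move=> k; rewrite exprS mulmxE.
rewrite IH // mulmxDr mulmxA hA.
set b0 : 'I_N'.+1 := inord (N' - j).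
have vb0 : (b0 : nat) = (N' - j)%N by rewrite inordK //; lia.
rewrite [in RHS](bigD1 b0) /=; last by rewrite vb0; lia.
rewrite -addrA; congr (_ + _); rewrite addrC; congr (_ + _).
  rewrite vb0 /useq -/b0.
  have -> : (N' - j - (N'.+1 - j.+1) = 0)%N by lia.
  by rewrite expr0 mul1mx.
rewrite mulmx_sumr; apply: eq_big => b.
  rewrite -val_eqE /= vb0; lia.
move=> hb; rewrite !mulmxA hA; congr (_ *m _ *m _); congr (_ ^+ _); lia.
Qed.

End Traj.

Section Main.
Variable R : realType.
Variables (n m N' nh nf ng : nat).
Variables (A : 'M[R]_n) (B : 'M[R]_(n, m)) (H : 'M[R]_(nh, n)) (h : 'cV[R]_nh)
  (F : 'M[R]_(nf, n)) (f : 'cV[R]_nf) (G : 'M[R]_(ng, m)) (g : 'cV[R]_ng).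

Lemma P_to_Q x w :
  lev (Gbar N'.+1 A B H F G *m col_mx x w) (gbar N'.+1 h g f) ->
  Qk A B (polyh H h) (polyh G g) (polyh F f) N'.+1 x.
Proof.
move=> hP.
have hF : forall j, (j <= N'.+1)%N -> polyh F f (traj A B x (useq w) j).
  move=> j hj a.
  have := hP (rshift _ (idx (inord (N'.+1 - j) : 'I_N'.+2) a)).
  rewrite row_F /gbar col_mxEd mxE ofs_idx inordK; last by lia.
  by rewrite subKn // -traj_formula.
split; first exact: (hF 0%N).
exists (useq w); split; [|split].
- move=> j hj a.
  have := hP (lshift _ (rshift nh (idx (inord (N' - j) : 'I_N'.+1) a))).
  by rewrite row_G /gbar col_mxEu col_mxEd mxE ofs_idx.
- by move=> j /andP [_ hj]; apply: hF.
- move=> p; have := hP (lshift _ (lshift _ p)).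
  rewrite row_H /gbar !col_mxEu traj_formula // subnn.
  rewrite (eq_bigl xpredT) //.
  by under [X in _ <= _ -> (_ *m (_ + X)) _ _ <= _]eq_bigr => b _ do rewrite subn0.
Qed.

Lemma Om_in_QN (T : 'M[R]_(nh + N'.+1 * ng + (N'.+2) * nf, nh))
  (M : 'M[R]_(n + N'.+1 * m))
  (hTnn : forall i j, 0 <= T i j)
  (hTH : T *m Hbar m N'.+1 H = Gbar N'.+1 A B H F G *m M)
  (hTh : lev (T *m h) (gbar N'.+1 h g f))
  (hI : Ibar R n m N'.+1 = Ibar R n m N'.+1 *m M) y :
  polyh H h y -> Qk A B (polyh H h) (polyh G g) (polyh F f) N'.+1 y.
Proof.
move=> hy.
set v := M *m col_mx y 0.
have hv : lev (Gbar N'.+1 A B H F G *m v) (gbar N'.+1 h g f).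
  move=> i; rewrite /v mulmxA -hTH -mulmxA /Hbar mul_row_col mul0mx addr0.
  apply: le_trans (hTh i); rewrite !mxE; apply: ler_sum => j _.
  by apply: ler_wpM2l; [exact: hTnn | exact: hy].
have e1 : Ibar R n m N'.+1 *m v = y.
  by rewrite /v mulmxA -hI /Ibar mul_row_col mul1mx mul0mx addr0.
have e2 : Ibar R n m N'.+1 *m v = usubmx v.
  by rewrite -{1}(vsubmxK v) /Ibar mul_row_col mul1mx mul0mx addr0.
have ev : v = col_mx y (dsubmx v) by rewrite -{1}(vsubmxK v) -e2 e1.
by apply: (@P_to_Q y (dsubmx v)); rewrite -ev.
Qed.

End Main.

Lemma traj_shift (R : realType) n m (A : 'M[R]_n) (B : 'M[R]_(n, m)) x w j :
  traj A B x w j.+1 = traj A B (A *m x + B *m w 0%N) (fun i => w i.+1) j.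
Proof.
elim: j => [|j IH] //.
by rewrite -[LHS]/(A *m traj A B x w j.+1 + B *m w j.+1) IH.
Qed.

Lemma polyh_conv (R : realType) r d (P : 'M[R]_(r, d)) p k (lam : 'I_k -> R) v :
  (forall i, 0 <= lam i) -> \sum_(i < k) lam i = 1 ->
  (forall i, polyh P p (v i)) -> polyh P p (\sum_(i < k) lam i *: v i).
Proof.
move=> h0 h1 hv a; rewrite mulmx_sumr summxE.
under eq_bigr => i _ do rewrite -scalemxAr mxE.
apply: (@le_trans _ _ (\sum_(i < k) lam i * p a 0)).
  by apply: ler_sum => i _; apply: ler_wpM2l; [exact: h0 | exact: hv].
by rewrite -mulr_suml h1 mul1r.
Qed.

Theorem theorem2 (R : realType) (n m N nh nf ng : nat)
  (A : 'M[R]_n) (B : 'M[R]_(n, m))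
  (H : 'M[R]_(nh, n)) (h : 'cV[R]_nh)
  (F : 'M[R]_(nf, n)) (f : 'cV[R]_nf)
  (G : 'M[R]_(ng, m)) (g : 'cV[R]_ng)
  (hN : (1 <= N)%N)
  (h0Om : polyh H h 0) (h0X : polyh F f 0) (h0U : polyh G g 0)
  (T : 'M[R]_(nh + N * ng + (N.+1) * nf, nh))
  (M : 'M[R]_(n + N * m))
  (hTnn : forall i j, 0 <= T i j)
  (hTH : T *m Hbar m N H = Gbar N A B H F G *m M)
  (hTh : lev (T *m h) (gbar N h g f))
  (hI : Ibar R n m N = Ibar R n m N *m M) :
  control_invariant A B (polyh G g) (Qbar A B (polyh H h) (polyh G g) (polyh F f) N)
  /\ (forall x, Qbar A B (polyh H h) (polyh G g) (polyh F f) N x -> polyh F f x).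
Proof.
case: N hN T M hTnn hTH hTh hI => [//|N'] _ T M hTnn hTH hTh hI.
set S := fun x => exists k, (1 <= k <= N'.+1)%N /\
  Qk A B (polyh H h) (polyh G g) (polyh F f) k x.
have step : forall x, S x -> exists u, polyh G g u /\ S (A *m x + B *m u).
  move=> x [k [hk [hX [w [hU [hXt hOm]]]]]].
  exists (w 0%N); split; first by apply: hU; case/andP: hk.
  case: k hk hU hXt hOm => [//|[|k]] hk hU hXt hOm.
    exists N'.+1; split; first by rewrite leqnn.
    exact: (Om_in_QN hTnn hTH hTh hI hOm).
  exists k.+1; split; first by case/andP: hk => _ hk; rewrite /= ltnW.
  split; first exact: (hXt 1%N).
  exists (fun i => w i.+1); split; [|split].
  - by move=> j hj; apply: hU.
  - by move=> j /andP [h1 h2]; rewrite -traj_shift; apply: hXt.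
  - by rewrite -traj_shift.
split.
  move=> x [p [lam [v [h0 [h1 [hS ->]]]]]].
  have /fin_all_exists [uf huf] : forall i : 'I_p, exists u,
      polyh G g u /\ S (A *m v i + B *m u) by move=> i; apply: step; exact: hS.
  exists (\sum_(i < p) lam i *: uf i); split.
    by apply: polyh_conv => // i; case: (huf i).
  exists p, lam, (fun i => A *m v i + B *m uf i); split; first by [].
  split; first by [].
  split; first by move=> i; case: (huf i).
  rewrite !mulmx_sumr -big_split /=; apply: eq_bigr => i _.
  by rewrite scalerDr !scalemxAr.
move=> x [p [lam [v [h0 [h1 [hS ->]]]]]].
apply: polyh_conv => // i.
by case: (hS i) => k [_ [hX _]].
Qed.
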